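(* Every sector renormalization of a rotation $\mathbb{L}_\theta$ of the closed unit disk is an iteration (composition) of prime renormalizations.
   Context: For $\theta\in\mathbb{R}/\mathbb{Z}$ let $\mathbb{L}_\theta:\overline{\mathbb{D}}\to\overline{\mathbb{D}}$, $z\mapsto e^{2\pi i\theta}z$. Sectors are closed sectors of $\overline{\mathbb{D}}$ with vertex $0$ bounded by two internal rays. A sector renormalization $\mathcal{R}$ of $\mathbb{L}_\theta$ consists of: a renormalization sector $\mathbb{X}$ written as a union of two subsectors $\mathbb{X}_-\cup\mathbb{X}_+$ with common boundary ray, normalized so that $1\in\mathbb{X}_-\cap\mathbb{X}_+$ (one of $\mathbb{X}_\pm$ may degenerate to a ray, but not both); a pair of iterates $(\mathbb{L}_\theta^{\mathbf a}|_{\mathbb{X}_-},\mathbb{L}_\theta^{\mathbf b}|_{\mathbb{X}_+})$ (the pre-renormalization) realizing the first return of points of $\mathbb{X}_-\cup\mathbb{X}_+$ back to $\mathbb{X}$; and the gluing map $\psi:\mathbb{X}\to\overline{\mathbb{D}}$, $z\mapsto z^{1/\omega}$ (with $\omega$ the angle of $\mathbb{X}$ at $0$ in full turns, argument measured from a boundary ray of $\mathbb{X}$), which projects the pair to a new rotation $\mathbb{L}_\mu$; one writes $\mathcal{R}\mathbb{L}_\theta=\mathbb{L}_\mu$. The composition $\mathcal{R}_2\circ\mathcal{R}_1$ of sector renormalizations $\mathcal{R}_1\mathbb{L}_\theta=\mathbb{L}_\mu$, $\mathcal{R}_2\mathbb{L}_\mu=\mathbb{L}_\nu$ is the sector renormalization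 of $\mathbb{L}_\theta$ obtained by lifting the pre-renormalization of $\mathcal{R}_2$ via $\psi_1$ to the dynamical plane of $\mathbb{L}_\theta$. The prime renormalization is the following sector renormalization (for $\theta\ne0$): let $\mathbb{Y}$ be the smallest closed sector bounded by an internal ray $\mathbb{I}$ and $\mathbb{L}_\theta(\mathbb{I})$, $\mathbb{Y}_-=\mathbb{L}_\theta^{-1}(\mathbb{Y})$, $\mathbb{Y}_+=\overline{\mathbb{D}\setminus(\mathbb{Y}\cup\mathbb{Y}_-)}$; the pre-renormalization is $(\mathbb{L}^2_\theta|_{\mathbb{Y}_-},\mathbb{L}_\theta|_{\mathbb{Y}_+})$ on $\mathbb{Y}_-\cup\mathbb{Y}_+$, with return times summing to $3$. *)

(* Defs.v *)
(* angles are real numbers measured in full turns (R/Z is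
   represented by R with equality modulo 1).  The rotation L_theta of the
   closed unit disk acts on internal rays (arguments) by x |-> x + theta;
   everything in the paper's definitions is radial, so sectors and their
   dynamics are described by arcs of arguments. *)
From Stdlib Require Import Reals ZArith.
Open Scope R_scope.

Definition eqm1 (x y : R) : Prop := exists k : Z, x - y = IZR k.

(* the closed sector of opening w (in turns) starting at the ray of argument s
   and going counterclockwise; w = 0 is the single ray s *)
Definition in_arc (s w x : R) : Prop :=
  exists k : Z, s <= x + IZR k <= s + w.

Definition in_open_arc (s w x : R) : Prop :=
  exists k : Z, s < x + IZR k < s + w.

(* "points" of a subsector for the first-return requirement: its interior,
   or the ray itself when the subsector degenerates to a ray *)
Definition rel_int (s w x : R) : Prop :=
  (w = 0 /\ eqm1 x s) \/ (0 < w /\ in_open_arc s w x).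

Definition Lit (theta : R) (n : nat) (x : R) : R := x + INR n * theta.

(* A (normalized) sector renormalization datum: the common ray of
   X_- and X_+ is the ray through 1 (argument 0);
   X_- = closed sector from -sr_p to 0, X_+ = closed sector from 0 to sr_q,
   X = X_- \cup X_+ (from -sr_p to sr_q), pre-renormalization
   (L^{sr_a} on X_-, L^{sr_b} on X_+). *)
Record SR := mkSR { sr_p : R; sr_q : R; sr_a : nat; sr_b : nat }.

Definition sr_X (S : SR) (x : R) : Prop := in_arc (- sr_p S) (sr_p S + sr_q S) x.

(* gluing map psi : X -> closed disk, z |-> z^{1/omega}, argument measured from
   the boundary ray -sr_p of X; psi_rel S x s  means  psi(x) = s (mod 1). *)
Definition psi_rel (S : SR) (x s : R) : Prop :=
  exists k : Z, - sr_p S <= x + IZR k <= sr_q S /\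
                s = (x + IZR k + sr_p S) / (sr_p S + sr_q S).

Definition first_return (theta : R) (X : R -> Prop) (n : nat) (x : R) : Prop :=
  X (Lit theta n x) /\ forall j : nat, (1 <= j < n)%nat -> ~ X (Lit theta j x).

Definition sector_renormalization (theta : R) (S : SR) (mu : R) : Prop :=
  let p := sr_p S in let q := sr_q S in
  let a := sr_a S in let b := sr_b S in
  0 <= p /\ 0 <= q /\ 0 < p + q /\ p + q < 1 /\
  (1 <= a)%nat /\ (1 <= b)%nat /\
  a <> b /\
  (forall x, rel_int (- p) p x -> first_return theta (sr_X S) a x) /\
  (forall x, rel_int 0 q x -> first_return theta (sr_X S) b x) /\
  (forall x, in_arc (- p) p x -> sr_X S (Lit theta a x)) /\
  (forall x, in_arc 0 q x -> sr_X S (Lit theta b x)) /\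
  (forall x s s', in_arc (- p) p x -> psi_rel S x s ->
      psi_rel S (Lit theta a x) s' -> eqm1 s' (s + mu)) /\
  (forall x s s', in_arc 0 q x -> psi_rel S x s ->
      psi_rel S (Lit theta b x) s' -> eqm1 s' (s + mu)).

Definition same_arc (s w : R) (A : R * R) : Prop :=
  forall x, in_arc s w x <-> in_arc (fst A) (snd A) x.

(* The prime construction for an internal ray I of argument iota,
   with t = theta mod 1 in (0,1):
   Y = smallest closed sector bounded by I and L(I):
       [iota, iota+t] if t <= 1/2,   [iota+t, iota+1] if t >= 1/2;
   Ym = L^{-1}(Y);  Yp = closure of the complement of Y \cup Ym
   (the ray iota + 1/2 when t = 1/2).  Arcs are (start, opening). *)
Definition prime_config (theta iota : R) (Ym Yp : R * R) : Prop :=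
  let t := frac_part theta in
  0 < t /\
  ((t <= 1/2 /\ Ym = (iota - t, t) /\ Yp = (iota + t, 1 - 2 * t))
   \/ (1/2 <= t /\ Ym = (iota, 1 - t) /\ Yp = (iota + 1 - t, 2 * t - 1))).

(* S is the prime renormalization of L_theta (R L_theta = L_mu):
   pre-renormalization (L^2 on Ym, L on Yp), renormalization sector Ym \cup Yp,
   normalized (rotated) so that the common ray is the ray through 1. *)
Definition is_prime (theta : R) (S : SR) (mu : R) : Prop :=
  sector_renormalization theta S mu /\
  exists iota Ym Yp c,
    prime_config theta iota Ym Yp /\
    ((same_arc (c - sr_p S) (sr_p S) Yp /\ same_arc c (sr_q S) Ym /\
      sr_a S = 1%nat /\ sr_b S = 2%nat)
     \/
     (same_arc (c - sr_p S) (sr_p S) Ym /\ same_arc c (sr_q S) Yp /\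
      sr_a S = 2%nat /\ sr_b S = 1%nat)).

(* R1 = S1 renormalizes L_theta to L_mu1, R2 = S2
   renormalizes L_mu1 to L_mu2.  psi1^{-1} sends s in [0,1] to
   -p1 + omega1 * s.  R2 (defined up to rotation, which commutes with L_mu1)
   is placed with its common ray at argument r, with its sector inside the
   image of psi1 (i.e. not crossing the glued boundary rays), and its
   pre-renormalization is lifted via psi1; S is the resulting sector
   renormalization of L_theta, renormalized so that its common ray is at 1. *)
Definition compose (theta : R) (S1 : SR) (mu1 : R) (S2 : SR) (mu2 : R)
    (S : SR) : Prop :=
  let p1 := sr_p S1 in let w1 := sr_p S1 + sr_q S1 in
  let lift := fun s => - p1 + w1 * s in
  sector_renormalization theta S1 mu1 /\
  sector_renormalization mu1 S2 mu2 /\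
  sector_renormalization theta S mu2 /\
  exists r : R,
    sr_p S2 <= r <= 1 - sr_q S2 /\
    sr_p S = w1 * sr_p S2 /\ sr_q S = w1 * sr_q S2 /\
    (forall t, - sr_p S <= t <= 0 ->
       exists s', 0 <= s' <= 1 /\
         eqm1 s' (Lit mu1 (sr_a S2) (r + t / w1)) /\
         eqm1 (Lit theta (sr_a S) (lift r + t)) (lift s')) /\
    (forall t, 0 <= t <= sr_q S ->
       exists s', 0 <= s' <= 1 /\
         eqm1 s' (Lit mu1 (sr_b S2) (r + t / w1)) /\
         eqm1 (Lit theta (sr_b S) (lift r + t)) (lift s')).

Inductive prime_iteration (theta : R) : SR -> R -> Prop :=
| pi_one : forall S mu, is_prime theta S mu -> prime_iteration theta S mu
| pi_step : forall S1 mu1 S2 mu2 S,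
    prime_iteration theta S1 mu1 ->
    is_prime mu1 S2 mu2 ->
    compose theta S1 mu1 S2 mu2 S ->
    prime_iteration theta S mu2.

(* Main.v *)
Require Import Defs.
From Stdlib Require Import Reals Lra Lia.
Open Scope R_scope.

Lemma int_small : forall n : Z, -1 < IZR n < 1 -> n = 0%Z.
Proof. intros n [H1 H2]. apply lt_IZR in H1. apply lt_IZR in H2. lia. Qed.

Lemma int_01 : forall n : Z, 0 <= IZR n <= 1 -> n = 0%Z \/ n = 1%Z.
Proof. intros n [H1 H2]. apply le_IZR in H1. apply le_IZR in H2. lia. Qed.

Lemma eqm1_refl : forall x, eqm1 x x.
Proof. intros; exists 0%Z; simpl; lra. Qed.

Lemma eqm1_sym : forall x y, eqm1 x y -> eqm1 y x.
Proof. intros x y [k Hk]; exists (-k)%Z; rewrite opp_IZR; lra. Qed.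

Lemma eqm1_trans : forall x y z, eqm1 x y -> eqm1 y z -> eqm1 x z.
Proof. intros x y z [k Hk] [m Hm]; exists (k+m)%Z; rewrite plus_IZR; lra. Qed.

Lemma eqm1_eq : forall x y, x = y -> eqm1 x y.
Proof. intros; subst; apply eqm1_refl. Qed.

Lemma in_arc_of : forall s w y z, s <= z <= s + w -> eqm1 y z -> in_arc s w y.
Proof. intros s w y z Hz [m Hm]. exists (-m)%Z. rewrite opp_IZR. lra. Qed.

Lemma in_arc_rep : forall s w x, in_arc s w x -> exists z, s <= z <= s + w /\ eqm1 x z.
Proof. intros s w x [k Hk]. exists (x + IZR k). split. lra. exists (-k)%Z. rewrite opp_IZR; lra. Qed.

Lemma in_arc_eqm : forall s w x y, in_arc s w x -> eqm1 x y -> in_arc s w y.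
Proof.
  intros s w x y H E. destruct (in_arc_rep _ _ _ H) as [z [Hz Ez]].
  apply (in_arc_of s w y z Hz). apply eqm1_trans with x. now apply eqm1_sym. exact Ez.
Qed.

Lemma not_in_arc : forall s w y z, 0 <= w -> s + w < z < s + 1 -> eqm1 y z -> ~ in_arc s w y.
Proof.
  intros s w y z Hw Hz E H. destruct (in_arc_rep _ _ _ (in_arc_eqm _ _ _ _ H E)) as [u [Hu [m Hm]]].
  assert (m = 0%Z \/ (1 <= IZR m) \/ (IZR m <= -1)) as [->|[Hm1|Hm1]].
  { assert (m = 0%Z \/ (1 <= m)%Z \/ (m <= -1)%Z) as [|[|]] by lia; [now left|right;left|right;right]; apply IZR_le; lia. }
  all: simpl in *; lra.
Qed.

Lemma rel_int_open : forall s w x z, 0 < w -> s < z < s + w -> eqm1 x z -> rel_int s w x.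
Proof. intros s w x z Hw Hz [m Hm]. right. split. lra. exists (-m)%Z. rewrite opp_IZR. lra. Qed.

Lemma rel_int_rep : forall s w x, 0 < w -> rel_int s w x -> exists z, s < z < s + w /\ eqm1 x z.
Proof.
  intros s w x Hw [[H0 _]|[_ [k Hk]]]. lra.
  exists (x + IZR k). split. lra. exists (-k)%Z. rewrite opp_IZR; lra.
Qed.

Lemma rel_int_closed : forall s w x, rel_int s w x -> in_arc s w x.
Proof.
  intros s w x [[H0 [k Hk]]|[_ [k Hk]]].
  - exists (-k)%Z. rewrite opp_IZR. lra.
  - exists k. lra.
Qed.

Lemma rel_int_mid : forall s w, 0 <= w -> rel_int s w (s + w/2).
Proof.
  intros s w Hw. destruct (Req_dec w 0) as [->|Hn].
  - left. split. reflexivity. exists 0%Z. simpl. lra.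
  - right. split. lra. exists 0%Z. simpl. lra.
Qed.

Lemma in_arc_ext : forall s w x s' w' x', s = s' -> w = w' -> x = x' -> in_arc s w x -> in_arc s' w' x'.
Proof. intros; subst; assumption. Qed.

Lemma rel_int_ext : forall s w x s' w' x', s = s' -> w = w' -> x = x' -> rel_int s w x -> rel_int s' w' x'.
Proof. intros; subst; assumption. Qed.

Lemma in_arc_opp : forall s w x, in_arc s w x -> in_arc (-(s+w)) w (-x).
Proof. intros s w x [k Hk]. exists (-k)%Z. rewrite opp_IZR. lra. Qed.

Lemma rel_int_opp : forall s w x, rel_int s w x -> rel_int (-(s+w)) w (-x).
Proof.
  intros s w x [[H0 [k Hk]]|[Hw [k Hk]]].
  - left. split. auto. exists (-k)%Z. rewrite opp_IZR. lra.
  - right. split. auto. exists (-k)%Z. rewrite opp_IZR. lra.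
Qed.

Lemma rep_in : forall y A, exists k : Z, A <= y + IZR k < A + 1.
Proof.
  intros y A. destruct (base_Int_part (y - A)) as [H1 H2].
  exists (- Int_part (y - A))%Z. rewrite opp_IZR. lra.
Qed.

Lemma frac_eqm : forall x t, eqm1 x t -> 0 <= t < 1 -> frac_part x = t.
Proof.
  intros x t [n Hn] Ht. unfold frac_part, Int_part.
  assert (E : (n + 1)%Z = up x).
  { apply tech_up; rewrite plus_IZR; simpl; lra. }
  rewrite <- E. rewrite minus_IZR, plus_IZR. simpl. lra.
Qed.

Lemma arc_contain : forall s l c S W, 0 <= l -> 0 <= W < 1 ->
  (forall x, s <= x <= s + l -> in_arc S W (x + c)) ->
  exists k : Z, S <= s + c + IZR k /\ s + l + c + IZR k <= S + W.
Proof.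
  intros s l c S W Hl HW H.
  destruct (H s) as [k Hk]. lra. exists k. split. lra.
  destruct (Rle_dec (s + l + c + IZR k) (S + W)) as [|Hn]. auto.
  exfalso. set (z0 := s + c + IZR k).
  set (e := Rmin (z0 + l - (S + W)) (1 - W) / 2).
  assert (He : 0 < e /\ e <= (z0 + l - (S+W))/2 /\ e <= (1 - W)/2).
  { unfold e. pose proof (Rmin_l (z0 + l - (S + W)) (1 - W)).
    pose proof (Rmin_r (z0 + l - (S + W)) (1 - W)).
    assert (0 < Rmin (z0 + l - (S + W)) (1 - W)) by (apply Rmin_glb_lt; unfold z0 in *; lra). lra. }
  apply (not_in_arc S W (s + (S + W + e - z0) + c) (S + W + e)).
  - lra.
  - unfold z0 in *. lra.
  - exists (-k)%Z. unfold z0. rewrite opp_IZR. lra.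
  - apply H. unfold z0 in *. lra.
Qed.

Lemma avoid : forall s l c S W, 0 < l -> 0 <= W < 1 ->
  (forall x, s < x < s + l -> ~ in_arc S W (x + c)) ->
  exists k : Z, S + W <= s + c + IZR k /\ s + l + c + IZR k <= S + 1.
Proof.
  intros s l c S W Hl HW H.
  destruct (rep_in (s + c) (S + W)) as [k Hk]. exists k. split. lra.
  destruct (Rle_dec (s + l + c + IZR k) (S + 1)) as [|Hn]. auto.
  exfalso.
  destruct (Rlt_dec (s + c + IZR k) (S + 1)) as [Hlt|Hge].
  - apply (H (s + (S + 1 - (s + c + IZR k)))). lra.
    apply (in_arc_of S W _ S). lra. exists (1 - k)%Z. rewrite minus_IZR. simpl. lra.
  - set (m := Rmin l (S + 1 + W - (s + c + IZR k))).
    assert (0 < m) by (apply Rmin_glb_lt; lra).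
    pose proof (Rmin_l l (S + 1 + W - (s + c + IZR k))).
    pose proof (Rmin_r l (S + 1 + W - (s + c + IZR k))).
    fold m in H1, H2.
    apply (H (s + m/2)). lra.
    apply (in_arc_of S W _ (s + c + IZR k + m/2 - 1)). lra.
    exists (1 - k)%Z. rewrite minus_IZR. simpl. lra.
Qed.

Lemma perturb : forall A B C D x y e, A < x < B -> C <= y <= D -> C < D ->
  exists eps, A < x + eps < B /\ C < y + eps < D /\ x + eps <> e.
Proof.
  intros A B C D x y e Hx Hy HCD.
  destruct (Rlt_dec y D) as [HyD|HyD].
  - set (d := Rmin (D - y) (B - x)).
    assert (0 < d) by (apply Rmin_glb_lt; lra).
    pose proof (Rmin_l (D - y) (B - x)). pose proof (Rmin_r (D - y) (B - x)). fold d in H0, H1.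
    destruct (Req_dec (x + d/2) e) as [E|E].
    + exists (d/3). repeat split; try lra.
    + exists (d/2). repeat split; lra.
  - set (d := Rmin (D - C) (x - A)).
    assert (0 < d) by (apply Rmin_glb_lt; lra).
    pose proof (Rmin_l (D - C) (x - A)). pose proof (Rmin_r (D - C) (x - A)). fold d in H0, H1.
    destruct (Req_dec (x - d/2) e) as [E|E].
    + exists (-(d/3)). repeat split; try lra.
    + exists (-(d/2)). repeat split; lra.
Qed.

Definition FRm (th p q : R) (a : nat) := forall x, rel_int (-p) p x ->
  forall j : nat, (1 <= j < a)%nat -> ~ in_arc (-p) (p + q) (x + INR j * th).
Definition FRp (th p q : R) (b : nat) := forall x, rel_int 0 q x ->
  forall j : nat, (1 <= j < b)%nat -> ~ in_arc (-p) (p + q) (x + INR j * th).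

Definition SRc (th p q : R) (a b : nat) :=
  0 <= p /\ 0 <= q /\ 0 < p + q /\ p + q < 1 /\ (1 <= a)%nat /\ (1 <= b)%nat /\ a <> b /\
  eqm1 (INR a * th) q /\ eqm1 (INR b * th) (-p) /\ FRm th p q a /\ FRp th p q b.

Lemma char : forall th mu p q a b,
  sector_renormalization th (mkSR p q a b) mu -> SRc th p q a b /\ eqm1 mu (q / (p + q)).
Proof.
  intros th mu p q a b H. unfold sector_renormalization in H. simpl in H.
  destruct H as [Hp [Hq [Hw [Hw1 [Ha [Hb [Hab [Fm [Fp [Mm [Mp [Gm Gp]]]]]]]]]]]].
  assert (FRm th p q a) as FM.
  { intros x Hx j Hj. exact (proj2 (Fm x Hx) j Hj). }
  assert (FRp th p q b) as FP.
  { intros x Hx j Hj. exact (proj2 (Fp x Hx) j Hj). }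
  destruct (arc_contain (-p) p (INR a * th) (-p) (p+q)) as [k1 [H1 H2]]; [lra | lra | |].
  { intros x Hx. apply (Mm x). exists 0%Z. simpl. lra. }
  destruct (arc_contain 0 q (INR b * th) (-p) (p+q)) as [k2 [H3 H4]]; [lra | lra | |].
  { intros x Hx. apply (Mp x). exists 0%Z. simpl. lra. }
  set (w := p + q) in *.
  set (d1 := INR a * th + IZR k1).
  set (d2 := INR b * th + IZR k2).
  assert (G1 : eqm1 (d1 / w) (0 + mu)).
  { apply (Gm (-p)).
    - exists 0%Z. simpl. lra.
    - exists 0%Z. split. simpl; lra. simpl. field. unfold w in *; lra.
    - exists k1. split. unfold Lit, w in *; simpl; lra. unfold Lit, d1, w; simpl. f_equal. ring. }
  assert (G2 : eqm1 ((q + d2 + p) / w) (1 + mu)).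
  { apply (Gp q).
    - exists 0%Z. simpl. lra.
    - exists 0%Z. split. simpl; lra. simpl. field. unfold w in *; lra.
    - exists k2. split. unfold Lit, d2, w in *; simpl; lra. unfold Lit, d2, w; simpl. f_equal. ring. }
  destruct G1 as [n1 G1]. destruct G2 as [n2 G2].
  assert (E1 : d1 = (IZR n1 + mu) * w).
  { assert (A1 : d1 / w = IZR n1 + mu) by lra. rewrite <- A1. field. unfold w in *; lra. }
  assert (E2 : q + d2 + p = (IZR n2 + 1 + mu) * w).
  { assert (A2 : (q + d2 + p) / w = IZR n2 + 1 + mu) by lra. rewrite <- A2. field. unfold w in *; lra. }
  assert (E : d1 - d2 = IZR (n1 - n2) * w).
  { rewrite minus_IZR. unfold w in *. nra. }
  assert (R1 : 0 <= d1 <= q) by (unfold d1, w in *; lra).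
  assert (R2 : -p <= d2 <= 0) by (unfold d2, w in *; lra).
  assert (n1 - n2 = 0 \/ n1 - n2 = 1 \/ (n1 - n2 >= 2) \/ (n1 - n2 <= -1))%Z as [N|[N|[N|N]]] by lia.
  -
    rewrite N in E. simpl in E.
    assert (Z1 : d1 = 0) by (unfold w in *; lra). assert (Z2 : d2 = 0) by (unfold w in *; lra).
    exfalso. destruct (Nat.lt_gt_cases a b) as [[L|L] _]; [exact Hab|..].
    + apply (FP (0 + q/2) (rel_int_mid 0 q Hq) a). lia.
      apply (in_arc_of _ _ _ (q/2)). unfold w in *; lra.
      exists (- k1)%Z. rewrite opp_IZR. unfold d1 in Z1. lra.
    + apply (FM (-p + p/2) (rel_int_mid (-p) p Hp) b). lia.
      apply (in_arc_of _ _ _ (-p + p/2)). unfold w in *; lra.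
      exists (- k2)%Z. rewrite opp_IZR. unfold d2 in Z2. lra.
  - rewrite N in E. simpl in E.
    assert (Z1 : d1 = q) by (unfold w in *; lra). assert (Z2 : d2 = -p) by (unfold w in *; lra).
    split.
    + repeat split; auto.
      * exists (-k1)%Z. rewrite opp_IZR. unfold d1 in Z1. lra.
      * exists (-k2)%Z. rewrite opp_IZR. unfold d2 in Z2. lra.
    + exists (- n1)%Z. rewrite opp_IZR.
      assert (Q : d1 / w = IZR n1 + mu) by (rewrite E1; field; unfold w in *; lra).
      rewrite Z1 in Q. lra.
  - exfalso. assert (2 <= IZR (n1 - n2)) by (apply IZR_le; lia). unfold w in *. nra.
  - exfalso. assert (IZR (n1 - n2) <= -1) by (apply IZR_le; lia). unfold w in *. nra.
Qed.

Lemma same_rep : forall A W y y' n, W < 1 -> A <= y <= A + W -> A <= y' <= A + W ->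
  y' - y = IZR n -> y' = y.
Proof.
  intros A W y y' n HW H1 H2 E. assert (n = 0%Z) by (apply int_small; lra). subst. simpl in E. lra.
Qed.

Lemma build : forall th mu p q a b,
  SRc th p q a b -> eqm1 mu (q / (p + q)) -> sector_renormalization th (mkSR p q a b) mu.
Proof.
  intros th mu p q a b H Hmu.
  destruct H as [Hp [Hq [Hw [Hw1 [Ha [Hb [Hab [[ma Ea] [[mb Eb] [FM FP]]]]]]]]]].
  destruct Hmu as [nu Enu].
  assert (MM : forall x, in_arc (-p) p x -> in_arc (-p) (p+q) (x + INR a * th)).
  { intros x Hx. destruct (in_arc_rep _ _ _ Hx) as [z [Hz [m Em]]].
    apply (in_arc_of _ _ _ (z + q)). lra. exists (m + ma)%Z. rewrite plus_IZR. lra. }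
  assert (MP : forall x, in_arc 0 q x -> in_arc (-p) (p+q) (x + INR b * th)).
  { intros x Hx. destruct (in_arc_rep _ _ _ Hx) as [z [Hz [m Em]]].
    apply (in_arc_of _ _ _ (z - p)). lra. exists (m + mb)%Z. rewrite plus_IZR. lra. }
  unfold sector_renormalization; simpl.
  split; [lra|]. split; [lra|]. split; [lra|]. split; [lra|].
  split; [exact Ha|]. split; [exact Hb|]. split; [exact Hab|].
  split. { intros x Hx. split. apply MM. now apply rel_int_closed. exact (FM x Hx). }
  split. { intros x Hx. split. apply MP. now apply rel_int_closed. exact (FP x Hx). }
  split. { exact MM. }
  split. { exact MP. }
  split.
  - intros x s s' Hx [k [Hk Hs]] [k' [Hk' Hs']]. simpl in *. unfold Lit in *.
    destruct (in_arc_rep _ _ _ Hx) as [z [Hz [m Em]]].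
    assert (E1 : x + IZR k = z).
    { apply (same_rep (-p) (p+q) z (x + IZR k) (m + k)). lra. lra. lra. rewrite plus_IZR. lra. }
    assert (E2 : x + INR a * th + IZR k' = z + q).
    { apply (same_rep (-p) (p+q) (z + q) _ (m + ma + k')). lra. lra. lra. rewrite !plus_IZR. lra. }
    rewrite E1 in Hs. rewrite E2 in Hs'.
    exists (- nu)%Z. rewrite opp_IZR.
    assert (s' - s = q / (p + q)) by (rewrite Hs, Hs'; field; lra). lra.
  - intros x s s' Hx [k [Hk Hs]] [k' [Hk' Hs']]. simpl in *. unfold Lit in *.
    destruct (in_arc_rep _ _ _ Hx) as [z [Hz [m Em]]].
    assert (E1 : x + IZR k = z).
    { apply (same_rep (-p) (p+q) z (x + IZR k) (m + k)). lra. lra. lra. rewrite plus_IZR. lra. }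
    assert (E2 : x + INR b * th + IZR k' = z - p).
    { apply (same_rep (-p) (p+q) (z - p) _ (m + mb + k')). lra. lra. lra. rewrite !plus_IZR. lra. }
    rewrite E1 in Hs. rewrite E2 in Hs'.
    exists (- nu - 1)%Z. rewrite minus_IZR, opp_IZR.
    assert (s' - s = q / (p + q) - 1) by (rewrite Hs, Hs'; field; lra). simpl. lra.
Qed.

Lemma INR_add_mul : forall m n th, INR (m + n) * th = INR m * th + INR n * th.
Proof. intros. rewrite plus_INR. ring. Qed.

Lemma INR_sub_mul : forall m n th, (n <= m)%nat -> INR (m - n) * th = INR m * th - INR n * th.
Proof. intros. rewrite minus_INR by assumption. ring. Qed.

Lemma int_no_between : forall n, 0 < IZR n < 1 -> False.
Proof. intros n [H1 H2]. apply lt_IZR in H1. apply lt_IZR in H2. lia. Qed.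

Lemma mirror : forall th p q a b, SRc th p q a b -> SRc (- th) q p b a.
Proof.
  intros th p q a b H.
  destruct H as [Hp [Hq [Hw [Hw1 [Ha [Hb [Hab [[ma Ea] [[mb Eb] [FM FP]]]]]]]]]].
  assert (Hneg : forall n : nat, INR n * - th = - (INR n * th)) by (intros; ring).
  repeat split; try lra; try lia.
  - exists (- mb)%Z. rewrite Hneg, opp_IZR. lra.
  - exists (- ma)%Z. rewrite Hneg, opp_IZR. lra.
  - intros x Hx j Hj Hin. refine (FP (- x) _ j Hj _).
    + pose proof (rel_int_opp _ _ _ Hx) as H1.
      revert H1. apply rel_int_ext; ring.
    + pose proof (in_arc_opp _ _ _ Hin) as H1. revert H1. apply in_arc_ext; try ring.
  - intros x Hx j Hj Hin. refine (FM (- x) _ j Hj _).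
    + pose proof (rel_int_opp _ _ _ Hx) as H1. revert H1. apply rel_int_ext; ring.
    + pose proof (in_arc_opp _ _ _ Hin) as H1. revert H1. apply in_arc_ext; try ring.
Qed.

Lemma reduce_lt : forall th p q a b, SRc th p q a b -> (a < b)%nat -> ~ (a = 1 /\ b = 2)%nat ->
  0 < q /\ SRc th (p + q) q a (b - a).
Proof.
  intros th p q a b H Hlt H12.
  destruct H as [Hp [Hq [Hw [Hw1 [Ha [Hb [Hab [[ma Ea] [[mb Eb] [FM FP]]]]]]]]]].
  assert (Hq0 : 0 < q).
  { destruct (Req_dec q 0) as [E|E]; [|lra]. exfalso.
    refine (FP 0 _ a _ _).
    - left. split. exact E. exists 0%Z. simpl. lra.
    - lia.
    - apply (in_arc_of _ _ _ 0). lra. exists ma. lra. }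
  assert (FP' : forall x, 0 < x < q -> forall j : nat, (1 <= j < b)%nat ->
                  ~ in_arc (-p) (p + q) (x + INR j * th)).
  { intros x Hx j Hj. apply FP; auto. apply (rel_int_open _ _ _ x). lra. lra. apply eqm1_refl. }
  assert (W1 : p + q + q <= 1).
  { destruct (avoid 0 q (INR a * th) (-p) (p + q) ltac:(lra) ltac:(lra)
       (fun x Hx => FP' x ltac:(lra) a ltac:(lia))) as [k [K1 K2]].
    assert (ma + k = 0)%Z by (apply int_small; rewrite plus_IZR; lra).
    assert (IZR ma + IZR k = 0) by (rewrite <- plus_IZR; rewrite H; reflexivity). lra. }
  assert (W2 : p + q + q < 1).
  { destruct (Req_dec (p + q + q) 1) as [E|E]; [|lra]. exfalso.
    destruct (Nat.lt_total b (a + a)) as [L|[L|L]].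
    - refine (FM (-p + p/2) (rel_int_mid (-p) p Hp) (a + a - b)%nat _ _). lia.
      apply (in_arc_of _ _ _ (-p + p/2)). lra.
      exists (1 + ma + ma - mb)%Z. rewrite INR_sub_mul by lia. rewrite INR_add_mul.
      rewrite !minus_IZR, !plus_IZR. simpl. lra.
    - assert (2 <= a)%nat by lia.
      destruct (avoid 0 q (INR 1 * th) (-p) (p + q) ltac:(lra) ltac:(lra)
       (fun x Hx => FP' x ltac:(lra) 1%nat ltac:(lia))) as [k [K1 K2]].
      refine (FM (-p + p/2) (rel_int_mid (-p) p Hp) (a - 1)%nat _ _). lia.
      apply (in_arc_of _ _ _ (-p + p/2)). lra.
      exists (ma + k)%Z. rewrite INR_sub_mul by lia. rewrite !plus_IZR. lra.
    - refine (FP' (q/2) _ (a + a)%nat _ _). lra. lia.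
      apply (in_arc_of _ _ _ (q/2 - p)). lra.
      exists (1 + ma + ma)%Z. rewrite INR_add_mul. rewrite !plus_IZR. simpl. lra. }
  split. exact Hq0.
  repeat split; try lra; try lia.
  - intro E. assert (b = a + a)%nat by lia. subst b. rewrite INR_add_mul in Eb.
    apply (int_no_between (mb - ma - ma)). rewrite !minus_IZR. lra.
  - exists ma. exact Ea.
  - exists (mb - ma)%Z. rewrite INR_sub_mul by lia. rewrite minus_IZR. lra.
  -
    intros x Hx j Hj Hin.
    destruct (rel_int_rep (-(p+q)) (p+q) x ltac:(lra) Hx) as [z0 [Hz0 [m0 Em0]]].
    destruct (in_arc_rep _ _ _ Hin) as [y0 [Hy0 [n0 En0]]].
    destruct (perturb (-(p+q)) 0 (-(p+q)) q z0 y0 (-p)) as [eps [Hx' [Hy' Hne]]]; try lra.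
    set (x' := z0 + eps) in *. set (y' := y0 + eps) in *.
    assert (Exy : x' + INR j * th - y' = IZR (n0 - m0)) by (unfold x', y'; rewrite minus_IZR; lra).
    destruct (Rlt_dec (-p) x') as [Lx|Lx]; destruct (Rle_dec (-p) y') as [Ly|Ly].
    + refine (FM x' _ j Hj _).
      * apply (rel_int_open _ _ _ x'). lra. lra. apply eqm1_refl.
      * apply (in_arc_of _ _ _ y'). lra. exists (n0 - m0)%Z. exact Exy.
    + refine (FP' (y' + p + q) _ (b - j)%nat _ _). lra. lia.
      apply (in_arc_of _ _ _ (x' + q)). lra.
      exists (mb - (n0 - m0))%Z. rewrite INR_sub_mul by lia. rewrite minus_IZR. lra.
    + refine (FP' (x' + p + q) _ (b - a + j)%nat _ _). lra. lia.
      apply (in_arc_of _ _ _ y'). lra.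
      exists ((n0 - m0) + mb - ma)%Z. rewrite INR_add_mul, INR_sub_mul by lia.
      rewrite minus_IZR, plus_IZR. lra.
    + refine (FP' (x' + p + q) _ j _ _). lra. lia.
      apply (in_arc_of _ _ _ (y' + p + q)). lra.
      exists (n0 - m0)%Z. lra.
  -
    intros x Hx j Hj Hin.
    destruct (rel_int_rep _ _ _ Hq0 Hx) as [z [Hz [m Em]]].
    destruct (in_arc_rep _ _ _ Hin) as [y [Hy [n En]]].
    destruct (Rle_dec (-p) y) as [Ly|Ly].
    + refine (FP' z _ j _ _). lra. lia.
      apply (in_arc_of _ _ _ y). lra. exists (n - m)%Z. rewrite minus_IZR. lra.
    + refine (FP' z _ (j + a)%nat _ _). lra. lia.
      apply (in_arc_of _ _ _ (y + q)). lra. exists (n - m + ma)%Z. rewrite INR_add_mul.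
      rewrite plus_IZR, minus_IZR. lra.
Qed.

Lemma divle : forall w x y, 0 < w -> x <= y * w -> x / w <= y.
Proof. intros w x y Hw H. unfold Rdiv. replace y with (y * w * / w) by (field; lra).
  apply Rmult_le_compat_r; [left; apply Rinv_0_lt_compat; lra | lra]. Qed.
Lemma divge : forall w x y, 0 < w -> y * w <= x -> y <= x / w.
Proof. intros w x y Hw H. unfold Rdiv. replace y with (y * w * / w) by (field; lra).
  apply Rmult_le_compat_r; [left; apply Rinv_0_lt_compat; lra | lra]. Qed.
Lemma divlt : forall w x y, 0 < w -> x < y * w -> x / w < y.
Proof. intros w x y Hw H. unfold Rdiv. replace y with (y * w * / w) by (field; lra).
  apply Rmult_lt_compat_r; [apply Rinv_0_lt_compat; lra | lra]. Qed.
Lemma divgt : forall w x y, 0 < w -> y * w < x -> y < x / w.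
Proof. intros w x y Hw H. unfold Rdiv. replace y with (y * w * / w) by (field; lra).
  apply Rmult_lt_compat_r; [apply Rinv_0_lt_compat; lra | lra]. Qed.

Lemma reduce_gt : forall th p q a b, SRc th p q a b -> (b < a)%nat -> ~ (a = 2 /\ b = 1)%nat ->
  0 < p /\ SRc th p (p + q) (a - b) b.
Proof.
  intros th p q a b H L N.
  destruct (reduce_lt _ _ _ _ _ (mirror _ _ _ _ _ H) L ltac:(lia)) as [Hp H1].
  split. exact Hp. apply mirror in H1. rewrite Ropp_involutive in H1.
  replace (p + q) with (q + p) by ring. exact H1.
Qed.

Lemma in_arc_shift : forall s w x n, in_arc s w x -> in_arc (s + IZR n) w x.
Proof. intros s w x n [k Hk]. exists (k + n)%Z. rewrite plus_IZR. lra. Qed.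

Lemma frac_Int : forall th, th - frac_part th = IZR (Int_part th).
Proof. intros. unfold frac_part. ring. Qed.

Lemma prime12 : forall th p q mu, frac_part th = q -> 0 < q -> q <= 1/2 -> p = 1 - 2 * q ->
  eqm1 mu (q / (p + q)) -> is_prime th (mkSR p q 1 2) mu.
Proof.
  intros th p q mu Hf Hq Hq2 Hp Hmu. subst p.
  pose proof (frac_Int th) as FI. rewrite Hf in FI.
  split.
  - apply build; [|exact Hmu].
    repeat split; try lra; try lia.
    + exists (Int_part th). simpl. lra.
    + exists (2 * Int_part th + 1)%Z. rewrite plus_IZR, mult_IZR. simpl. lra.
    + intros x Hx j Hj. lia.
    + intros x Hx j Hj. assert (j = 1%nat) by lia. subst j.
      destruct (rel_int_rep _ _ _ Hq Hx) as [z [Hz [m Em]]].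
      apply (not_in_arc _ _ _ (z + q)). lra. lra.
      exists (m + Int_part th)%Z. rewrite plus_IZR. simpl. lra.
  - exists q, (q - q, q), (q + q, 1 - 2 * q), 0.
    split.
    + unfold prime_config. rewrite Hf. split. exact Hq. left. split. exact Hq2. split; reflexivity.
    + left. simpl. split; [|split; [|split; reflexivity]].
      * intro x. simpl. split; intro H.
        -- apply (in_arc_shift _ _ _ 1%Z) in H. revert H. apply in_arc_ext; simpl; ring.
        -- apply (in_arc_shift _ _ _ (-1)%Z) in H. revert H. apply in_arc_ext; simpl; ring.
      * intro x. simpl. split; apply in_arc_ext; ring.
Qed.

Lemma prime21 : forall th p q t mu, frac_part th = t -> 1/2 <= t -> t < 1 -> p = 1 - t ->
  q = 2 * t - 1 -> eqm1 mu (q / (p + q)) -> is_prime th (mkSR p q 2 1) mu.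
Proof.
  intros th p q t mu Hf Ht Ht1 Hp Hq Hmu. subst p q.
  pose proof (frac_Int th) as FI. rewrite Hf in FI.
  split.
  - apply build; [|exact Hmu].
    repeat split; try lra; try lia.
    + exists (2 * Int_part th + 1)%Z. rewrite plus_IZR, mult_IZR. simpl. lra.
    + exists (Int_part th + 1)%Z. rewrite plus_IZR. simpl. lra.
    + intros x Hx j Hj. assert (j = 1%nat) by lia. subst j.
      destruct (rel_int_rep (-(1-t)) (1-t) x ltac:(lra) Hx) as [z [Hz [m Em]]].
      apply (not_in_arc _ _ _ (z + t)). lra. lra.
      exists (m + Int_part th)%Z. rewrite plus_IZR. simpl. lra.
    + intros x Hx j Hj. lia.
  - exists (t - 1), (t - 1, 1 - t), (t - 1 + 1 - t, 2 * t - 1), 0.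
    split.
    + unfold prime_config. rewrite Hf. split. lra. right. split. exact Ht. split; reflexivity.
    + right. simpl. split; [|split; [|split; reflexivity]].
      * intro x. simpl. split; apply in_arc_ext; ring.
      * intro x. simpl. split; apply in_arc_ext; ring.
Qed.

Lemma compose_lt : forall th p q a b mu,
  SRc th p q a b -> 0 < q -> SRc th (p + q) q a (b - a) ->
  sector_renormalization (q / (p + q + q)) (mkSR (p / (p + q + q)) (q / (p + q + q)) 1 2) mu ->
  sector_renormalization th (mkSR p q a b) mu ->
  compose th (mkSR (p + q) q a (b - a)) (q / (p + q + q))
             (mkSR (p / (p + q + q)) (q / (p + q + q)) 1 2) mu (mkSR p q a b).
Proof.
  intros th p q a b mu H Hq0 H1 H2 H3.
  pose proof H as H'.
  destruct H' as [Hp [Hq [Hw [Hw1 [Ha [Hb [Hab [[ma Ea] [[mb Eb] [FM FP]]]]]]]]]].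
  assert (W1 : p + q + q < 1) by (destruct H1 as [_ [_ [_ [X _]]]]; exact X).
  assert (Hw0 : 0 < p + q + q) by lra.
  unfold compose. simpl.
  split. { apply build. exact H1. apply eqm1_refl. }
  split. exact H2. split. exact H3.
  exists ((p + q) / (p + q + q)).
  split. { split. apply divle. lra. replace ((p + q) / (p + q + q) * (p + q + q)) with (p + q) by (field; lra). lra.
           assert (E : 1 - q / (p + q + q) = (p + q) / (p + q + q)) by (field; lra). lra. }
  split. { field. lra. }
  split. { field. lra. }
  assert (Er : (p + q + q) * ((p + q) / (p + q + q)) = p + q) by (field; lra).
  split.
  - intros t Ht. exists (1 + t / (p + q + q)). split.
    + split. assert (-1 <= t / (p + q + q)) by (apply divge; lra). lra.
      assert (t / (p + q + q) <= 0) by (apply divle; lra). lra.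
    + split.
      * exists 0%Z. unfold Lit. simpl. field. lra.
      * exists ma. unfold Lit. rewrite Er.
        assert ((p + q + q) * (1 + t / (p + q + q)) = p + q + q + t) by (field; lra). lra.
  - intros t Ht. exists ((q + t) / (p + q + q)). split.
    + split. apply divge; lra. apply divle; lra.
    + split.
      * exists (-1)%Z. unfold Lit. simpl. field. lra.
      * exists mb. unfold Lit. rewrite Er.
        assert ((p + q + q) * ((q + t) / (p + q + q)) = q + t) by (field; lra). lra.
Qed.

Lemma compose_gt : forall th p q a b mu,
  SRc th p q a b -> 0 < p -> SRc th p (p + q) (a - b) b ->
  sector_renormalization ((p + q) / (p + (p + q))) (mkSR (p / (p + (p + q))) (q / (p + (p + q))) 2 1) mu ->
  sector_renormalization th (mkSR p q a b) mu ->
  compose th (mkSR p (p + q) (a - b) b) ((p + q) / (p + (p + q)))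
             (mkSR (p / (p + (p + q))) (q / (p + (p + q))) 2 1) mu (mkSR p q a b).
Proof.
  intros th p q a b mu H Hp0 H1 H2 H3.
  pose proof H as H'.
  destruct H' as [Hp [Hq [Hw [Hw1 [Ha [Hb [Hab [[ma Ea] [[mb Eb] [FM FP]]]]]]]]]].
  assert (W1 : p + (p + q) < 1) by (destruct H1 as [_ [_ [_ [X _]]]]; exact X).
  assert (Hw0 : 0 < p + (p + q)) by lra.
  unfold compose. simpl.
  split. { apply build. exact H1. apply eqm1_refl. }
  split. exact H2. split. exact H3.
  exists (p / (p + (p + q))).
  split. { split. lra.
           assert (E : 1 - q / (p + (p + q)) = (p + p) / (p + (p + q))) by (field; lra).
           rewrite E. apply divle. lra. replace ((p + p) / (p + (p + q)) * (p + (p + q))) with (p + p) by (field; lra). lra. }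
  split. { field. lra. }
  split. { field. lra. }
  assert (Er : (p + (p + q)) * (p / (p + (p + q))) = p) by (field; lra).
  split.
  - intros t Ht. exists ((p + q + t) / (p + (p + q))). split.
    + split. apply divge; lra. apply divle; lra.
    + split.
      * exists (-1)%Z. unfold Lit. simpl. field. lra.
      * exists ma. unfold Lit. rewrite Er.
        assert ((p + (p + q)) * ((p + q + t) / (p + (p + q))) = p + q + t) by (field; lra). lra.
  - intros t Ht. exists (t / (p + (p + q))). split.
    + split. apply divge; lra. apply divle; lra.
    + split.
      * exists (-1)%Z. unfold Lit. simpl. field. lra.
      * exists mb. unfold Lit. rewrite Er.
        assert ((p + (p + q)) * (t / (p + (p + q))) = t) by (field; lra). lra.
Qed.

Lemma main_ind : forall n th p q a b mu, (a + b <= n)%nat -> SRc th p q a b ->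
  eqm1 mu (q / (p + q)) -> prime_iteration th (mkSR p q a b) mu.
Proof.
  induction n as [|n IH]; intros th p q a b mu Hn H Hmu.
  { destruct H as [_ [_ [_ [_ [Ha _]]]]]. lia. }
  pose proof H as H'.
  destruct H' as [Hp [Hq [Hw [Hw1 [Ha [Hb [Hab [[ma Ea] [[mb Eb] [FM FP]]]]]]]]]].
  destruct (Nat.eq_dec a 1) as [A1|A1]; [destruct (Nat.eq_dec b 2) as [B2|B2]|].
  - subst a b. simpl in Ea, Eb.
    assert (E : p + q + q = 1).
    { assert (IZR (mb - ma - ma) = p + q + q) by (rewrite !minus_IZR; lra).
      assert (mb - ma - ma = 1)%Z.
      { assert (0 < mb - ma - ma)%Z by (apply lt_IZR; lra).
        assert (mb - ma - ma < 2)%Z by (apply lt_IZR; lra). lia. }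
      rewrite H1 in H0. simpl in H0. lra. }
    apply pi_one. apply prime12; try lra.
    + apply frac_eqm. exists ma. lra. lra.
    + exact Hmu.
  -
    assert (L : (a < b)%nat) by lia.
    destruct (reduce_lt _ _ _ _ _ H L ltac:(lia)) as [Hq0 H1].
    assert (W1 : p + q + q < 1) by (destruct H1 as [_ [_ [_ [X _]]]]; exact X).
    assert (Hw0 : 0 < p + q + q) by lra.
    assert (HP : is_prime (q / (p + q + q)) (mkSR (p / (p + q + q)) (q / (p + q + q)) 1 2) mu).
    { apply prime12.
      - apply frac_eqm. apply eqm1_refl. split. apply divge; lra. apply divlt; lra.
      - apply divgt; lra.
      - apply divle; lra.
      - field. lra.
      - apply (eqm1_trans _ _ _ Hmu). apply eqm1_eq. field. lra. }
    apply (pi_step th (mkSR (p + q) q a (b - a)%nat) (q / (p + q + q)) _ _ _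
             (IH th (p + q) q a (b - a)%nat (q / (p + q + q)) ltac:(lia) H1 ltac:(apply eqm1_refl)) HP).
    apply compose_lt; auto. exact (proj1 HP). apply build; auto.
  - destruct (Nat.lt_gt_cases a b) as [[L|L] _]; [exact Hab| |].
    + destruct (reduce_lt _ _ _ _ _ H L ltac:(lia)) as [Hq0 H1].
      assert (W1 : p + q + q < 1) by (destruct H1 as [_ [_ [_ [X _]]]]; exact X).
      assert (Hw0 : 0 < p + q + q) by lra.
      assert (HP : is_prime (q / (p + q + q)) (mkSR (p / (p + q + q)) (q / (p + q + q)) 1 2) mu).
      { apply prime12.
        - apply frac_eqm. apply eqm1_refl. split. apply divge; lra. apply divlt; lra.
        - apply divgt; lra.
        - apply divle; lra.
        - field. lra.
        - apply (eqm1_trans _ _ _ Hmu). apply eqm1_eq. field. lra. }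
      apply (pi_step th (mkSR (p + q) q a (b - a)%nat) (q / (p + q + q)) _ _ _
               (IH th (p + q) q a (b - a)%nat (q / (p + q + q)) ltac:(lia) H1 ltac:(apply eqm1_refl)) HP).
      apply compose_lt; auto. exact (proj1 HP). apply build; auto.
    + destruct (Nat.eq_dec a 2) as [A2|A2]; [destruct (Nat.eq_dec b 1) as [B1|B1]|].
      * subst a b. simpl in Ea, Eb.
        assert (E : q + p + p = 1).
        { assert (IZR (mb + mb - ma) = q + p + p) by (rewrite minus_IZR, plus_IZR; lra).
          assert (mb + mb - ma = 1)%Z.
          { assert (0 < mb + mb - ma)%Z by (apply lt_IZR; lra).
            assert (mb + mb - ma < 2)%Z by (apply lt_IZR; lra). lia. }
          rewrite H1 in H0. simpl in H0. lra. }
        apply pi_one. apply (prime21 _ _ _ (1 - p)); try lra.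
        apply frac_eqm. exists (mb - 1)%Z. rewrite minus_IZR. simpl. lra. lra. exact Hmu.
      * destruct (reduce_gt _ _ _ _ _ H L ltac:(lia)) as [Hp0 H1].
        assert (W1 : p + (p + q) < 1) by (destruct H1 as [_ [_ [_ [X _]]]]; exact X).
        assert (Hw0 : 0 < p + (p + q)) by lra.
        assert (HP : is_prime ((p + q) / (p + (p + q))) (mkSR (p / (p + (p + q))) (q / (p + (p + q))) 2 1) mu).
        { apply (prime21 _ _ _ ((p + q) / (p + (p + q)))).
          - apply frac_eqm. apply eqm1_refl. split. apply divge; lra. apply divlt; lra.
          - apply divge; lra.
          - apply divlt; lra.
          - field. lra.
          - field. lra.
          - apply (eqm1_trans _ _ _ Hmu). apply eqm1_eq. field. lra. }
        apply (pi_step th (mkSR p (p + q) (a - b)%nat b) ((p + q) / (p + (p + q))) _ _ _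
                 (IH th p (p + q) (a - b)%nat b ((p + q) / (p + (p + q))) ltac:(lia) H1 ltac:(apply eqm1_refl)) HP).
        apply compose_gt; auto. exact (proj1 HP). apply build; auto.
      * destruct (reduce_gt _ _ _ _ _ H L ltac:(lia)) as [Hp0 H1].
        assert (W1 : p + (p + q) < 1) by (destruct H1 as [_ [_ [_ [X _]]]]; exact X).
        assert (Hw0 : 0 < p + (p + q)) by lra.
        assert (HP : is_prime ((p + q) / (p + (p + q))) (mkSR (p / (p + (p + q))) (q / (p + (p + q))) 2 1) mu).
        { apply (prime21 _ _ _ ((p + q) / (p + (p + q)))).
          - apply frac_eqm. apply eqm1_refl. split. apply divge; lra. apply divlt; lra.
          - apply divge; lra.
          - apply divlt; lra.
          - field. lra.
          - field. lra.
          - apply (eqm1_trans _ _ _ Hmu). apply eqm1_eq. field. lra. }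
        apply (pi_step th (mkSR p (p + q) (a - b)%nat b) ((p + q) / (p + (p + q))) _ _ _
                 (IH th p (p + q) (a - b)%nat b ((p + q) / (p + (p + q))) ltac:(lia) H1 ltac:(apply eqm1_refl)) HP).
        apply compose_gt; auto. exact (proj1 HP). apply build; auto.
Qed.

Theorem lemmaA2 : forall (theta mu : R) (S : SR),
  sector_renormalization theta S mu -> prime_iteration theta S mu.
Proof.
  intros theta mu [p q a b] H.
  destruct (char _ _ _ _ _ _ H) as [H1 H2].
  exact (main_ind (a + b) theta p q a b mu (le_n _) H1 H2).
Qed.
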